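(* Let $E$ be a topological space, let $\Omega\subseteq E$ be a non-empty relatively compact open set with $\partial\Omega\neq\emptyset$, and let $Y$ be a real locally convex Hausdorff topological vector space. For any continuous function $f:\overline{\Omega}\to Y$, the following are equivalent: (b1) $f$ satisfies the convex hull property in $\overline{\Omega}$, i.e. $f(\Omega)\subseteq\overline{\mathrm{conv}}(f(\partial\Omega))$; (b2) for every continuous and quasi-convex function $\psi:Y\to\mathbf{R}$, one has $\sup_{x\in\Omega}\psi(f(x))=\sup_{x\in\partial\Omega}\psi(f(x))$.
   Context: $\overline{\Omega}$ and $\partial\Omega$ are the closure and boundary of $\Omega$ in $E$; $\overline{\mathrm{conv}}(S)$ is the closed convex hull of $S$. A function $\psi:Y\to\mathbf{R}$ is quasi-convex if for each $r\in\mathbf{R}$ the set $\psi^{-1}(]-\infty,r])$ is convex. *)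

(* Defs.v *)
From HB Require Import structures.
From mathcomp Require Import all_boot all_order all_algebra.
From mathcomp Require Import all_classical all_reals all_analysis.
Set Implicit Arguments. Unset Strict Implicit. Unset Printing Implicit Defensive.
Import Order.TTheory GRing.Theory Num.Theory.
Local Open Scope classical_set_scope.
Local Open Scope ring_scope.

Definition boundary (T : topologicalType) (A : set T) : set T :=
  closure A `\` interior A.

Definition conv_hull (R : realType) (Y : tvsType R) (S : set Y) : set Y :=
  \bigcap_(C in [set C : set Y | @convex_set R Y C /\ S `<=` C]) C.

Definition closed_conv_hull (R : realType) (Y : tvsType R) (S : set Y) : set Y :=
  closure (conv_hull S).

Definition quasi_convex (R : realType) (Y : tvsType R) (psi : Y -> R) : Prop :=
  forall r : R, @convex_set R Y [set y : Y | psi y <= r].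

(* Main.v *)
Require Import Defs.
From HB Require Import structures.
From mathcomp Require Import all_boot all_order all_algebra.
From mathcomp Require Import all_classical all_reals all_analysis.
From mathcomp Require Import lra.
Import Order.TTheory GRing.Theory Num.Theory.
Import numFieldNormedType.Exports.
Local Open Scope classical_set_scope.
Local Open Scope ring_scope.
Local Open Scope convex_scope.

Section Gauge.
Variables (R : realType) (Y : tvsType R).

Lemma cvx (A : set Y) (x y : Y) (t : R) : @convex_set R Y A -> A x -> A y ->
  0 <= t -> t <= 1 -> A (t *: x + (1 - t) *: y).
Proof.
move=> cA Ax Ay t0 t1.
have := cA x y (Itv01 t0 t1); rewrite !inE => /(_ Ax Ay).
by [].
Qed.
Arguments cvx {A x y t}.

Lemma cvxI (A : set Y) :
  (forall x y t, 0 <= t -> t <= 1 -> A x -> A y -> A (t *: x + (1 - t) *: y)) ->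
  @convex_set R Y A.
Proof.
move=> h x y l; rewrite !inE => Ax Ay. change (A (x <| l |> y)). 
exact: (h x y l%:num (ge0 l) (le1 l) Ax Ay).
Qed.

Variables (C W : set Y).
Hypotheses (cC : @convex_set R Y C) (cW : @convex_set R Y W) (W0 : W 0).

Definition gS (z : Y) := [set t : R | 0 < t /\
  (1 <= t \/ exists c w, C c /\ W w /\ z = c + t *: w)].
Definition gpsi (z : Y) := inf (gS z).

Lemma gS1 z : gS z 1.
Proof. by split; [exact: ltr01| left]. Qed.

Lemma gS_hasinf z : has_inf (gS z).
Proof. split; first by exists 1; exact: gS1.
by exists 0 => t [t0 _]; exact: ltW.
Qed.

Lemma gpsi_le z t : gS z t -> gpsi z <= t.
Proof. by move=> h; apply: ge_inf => //; exact: (gS_hasinf z).2. Qed.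

Lemma gpsi_ge0 z : 0 <= gpsi z.
Proof. apply: lb_le_inf; first by exists 1; exact: gS1.
by move=> t [t0 _]; exact: ltW.
Qed.

Lemma gS_up z s t : gS z s -> s <= t -> gS z t.
Proof.
move=> [s0 [s1|[c [w [Cc [Ww ->]]]]]] st.
  by split; [exact: lt_le_trans st| left; exact: le_trans st].
have t0 : 0 < t by exact: lt_le_trans st.
split => //; right; exists c, ((s / t) *: w + (1 - s / t) *: 0); split => //; split.
  apply: cvx => //; first by rewrite divr_ge0 // ltW.
  by rewrite ler_pdivrMr // mul1r.
by rewrite scaler0 addr0 scalerA mulrCA divff ?mulr1 // gt_eqF.
Qed.

Lemma gS_lt z r : gpsi z < r -> gS z r.
Proof.
move=> /(inf_lt (ex_intro _ 1 (gS1 z))) [t St tr].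
exact: gS_up St (ltW tr).
Qed.

Lemma gpsi_ub z r : (forall e, 0 < e -> gS z (r + e)) -> gpsi z <= r.
Proof. by move=> h; apply/ler_addgt0Pr => e e0; apply: gpsi_le; exact: h. Qed.

Lemma gpsiC c : C c -> gpsi c <= 0.
Proof.
move=> Cc; apply: gpsi_ub => e e0; rewrite add0r; split => //; right.
by exists c, 0; split => //; split => //; rewrite scaler0 addr0.
Qed.

Lemma gpsi_y y : (forall c w, C c -> W w -> y <> c + w) -> 1 <= gpsi y.
Proof.
move=> H; apply: lb_le_inf; first by exists 1; exact: gS1.
move=> t [t0 [//|[c [w [Cc [Ww ey]]]]]].
case: (leP 1 t) => // t1; exfalso; apply: (H c (t *: w)) => //.
have := cvx cW Ww W0 (ltW t0) (ltW t1).
by rewrite scaler0 addr0.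
Qed.

Lemma gpsi_quasi : quasi_convex gpsi.
Proof.
move=> r; apply: cvxI => z1 z2 t t0 t1 /= h1 h2.
apply: gpsi_ub => e e0.
have l1 : gpsi z1 < r + e by apply: le_lt_trans h1 _; rewrite ltrDl.
have s0 : 0 < r + e by apply: le_lt_trans (gpsi_ge0 z1) l1.
have S1 := gS_lt _ _ l1.
have /(gS_lt _ _) S2 : gpsi z2 < r + e by apply: le_lt_trans h2 _; rewrite ltrDl.
split => //.
case: (leP 1 (r + e)) => [h|h]; first by left.
right.
case: S1 => _ [h'|[c1 [w1 [Cc1 [Ww1 e1]]]]]; first by move: h; rewrite ltNge h'.
case: S2 => _ [h'|[c2 [w2 [Cc2 [Ww2 e2]]]]]; first by move: h; rewrite ltNge h'.
exists (t *: c1 + (1 - t) *: c2), (t *: w1 + (1 - t) *: w2).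
split; first exact: cvx.
split; first exact: cvx.
rewrite e1 e2 !scalerDr !scalerA.
rewrite (mulrC (r + e) t) (mulrC (r + e) (1 - t)).
by rewrite addrACA.
Qed.

Lemma gpsi_step z v e : W v -> 0 < e -> gpsi (z + e *: v) <= gpsi z + e.
Proof.
move=> Wv e0; apply: gpsi_ub => d d0.
have /gS_lt : gpsi z < gpsi z + d by rewrite ltrDl.
set s := gpsi z + d => -[s0 hs].
have -> : gpsi z + e + d = s + e by rewrite /s addrAC.
have se0 : 0 < s + e by exact: addr_gt0.
split => //.
case: hs => [h|[c [w [Cc [Ww ->]]]]].
  by left; apply: le_trans h _; rewrite lerDl ltW.
right; exists c, ((s / (s + e)) *: w + (1 - s / (s + e)) *: v); split => //; split.
  apply: cvx => //; first by rewrite divr_ge0 // ltW.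
  by rewrite ler_pdivrMr // mul1r lerDl ltW.
have h1 : (s + e) * (s / (s + e)) = s by rewrite mulrCA divff ?mulr1 // gt_eqF.
have h2 : (s + e) * (1 - s / (s + e)) = e by rewrite mulrBr mulr1 h1 addrC addKr.
by rewrite scalerDr !scalerA h1 h2 addrA.
Qed.

Hypothesis nW : nbhs 0 W.

Lemma gpsi_cont : continuous gpsi.
Proof.
move=> z; apply/cvgrPdist_le => e e0.
have N : nbhs z (+%R z @` ( *:%R e @` (W `&` (-%R @` W)))).
  apply: nbhsT.
  apply: nbhs0Z; first by rewrite gt_eqF.
  by apply: filterI => //; exact: nbhs0N.
apply: filterS N => _ [_ [v [Wv [w Ww wv]] <-] <-] /=.
have h1 := gpsi_step z v e Wv e0.
have h2 : gpsi z <= gpsi (z + e *: v) + e.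
  have := gpsi_step (z + e *: v) w e Ww e0.
  by rewrite -wv scalerN addrNK.
rewrite ler_norml; apply/andP; split; lra.
Qed.

End Gauge.

Lemma conv_hull_convex (R : realType) (Y : tvsType R) (K : set Y) :
  @convex_set R Y (conv_hull K).
Proof.
apply: cvxI => x y t t0 t1 hx hy C' [cC' KC'].
by apply: cvx => //; [apply: hx | apply: hy].
Qed.

Lemma sub_conv_hull (R : realType) (Y : tvsType R) (K : set Y) :
  K `<=` conv_hull K.
Proof. by move=> x Kx C' [_ h]; exact: h. Qed.

Lemma conv_hull_min (R : realType) (Y : tvsType R) (K L : set Y) :
  @convex_set R Y L -> K `<=` L -> conv_hull K `<=` L.
Proof. by move=> cL KL x hx; apply: hx. Qed.

Theorem proposition2 (R : realType) (E : topologicalType) (Y : tvsType R)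
  (Omega : set E) (f : E -> Y) :
  Omega !=set0 -> open Omega -> compact (closure Omega) ->
  boundary Omega !=set0 -> hausdorff_space Y ->
  {within closure Omega, continuous f} ->
  (f @` Omega `<=` closed_conv_hull (f @` boundary Omega) <->
   (forall psi : Y -> R, continuous psi -> quasi_convex psi ->
      ereal_sup [set (psi (f x))%:E | x in Omega] =
      ereal_sup [set (psi (f x))%:E | x in boundary Omega])).
Proof.
move=> [x1 Ox1] _ _ [x2 Bx2] _ hf; split.
- move=> H psi cpsi qpsi; apply/eqP; rewrite eq_le; apply/andP; split.
  + apply: ge_ereal_sup => _ [x Ox <-].
    set s := ereal_sup _.
    have ub : forall x', boundary Omega x' -> ((psi (f x'))%:E <= s)%E.
      by move=> x' Bx'; apply: ereal_sup_ubound; exists x'.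
    case Es: s => [r| |]; last first.
    * by have := ub _ Bx2; rewrite Es.
    * by rewrite leey.
    rewrite lee_fin.
    pose L := [set v : Y | psi v <= r].
    have cL : closed L.
      by move/continuous_closedP : cpsi => /(_ _ (@closed_le _ r)).
    have KL : f @` boundary Omega `<=` L.
      by move=> _ [x' Bx' <-]; have := ub _ Bx'; rewrite Es lee_fin.
    have : closed_conv_hull (f @` boundary Omega) (f x) by apply: H; exists x.
    move=> /(closure_subset (@conv_hull_min _ _ _ _ (qpsi r) KL)).
    by rewrite -(proj1 (closure_id L) cL).
  + apply: ge_ereal_sup => _ [x Bx <-].
    set s := ereal_sup _.
    have ub : forall x', Omega x' -> ((psi (f x'))%:E <= s)%E.
      by move=> x' Ox'; apply: ereal_sup_ubound; exists x'.
    case Es: s => [r| |]; last first.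
    * by have := ub _ Ox1; rewrite Es.
    * by rewrite leey.
    rewrite lee_fin; apply/ler_addgt0Pr => e e0.
    have clx : closure Omega x := Bx.1.
    have N1 : nbhs (f x) [set v | `|psi (f x) - psi v| < e].
      by have /cvgrPdist_lt := cpsi (f x); apply.
    have N2 := hf x _ N1.
    have N3 : within (closure Omega) (nbhs x)
        [set z | `|psi (f x) - psi (f z)| < e].
      by rewrite (nbhs_subspace_in clx); exact: N2.
    move: N3 => /= {}N2.
    have [z [Oz Pz]] := clx _ N2.
    have := Pz (subset_closure Oz); rewrite /from_subspace /= => hz.
    have := ub _ Oz; rewrite Es lee_fin => hr.
    move: hz; rewrite ltr_norml => /andP[_ hz].
    lra.
- move=> H _ [x0 Ox0 <-].
  apply: contrapT => ny.
  set K := f @` boundary Omega.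
  set C := conv_hull K.
  have [B [nB hB]] : exists B, nbhs (f x0) B /\ (forall c, C c -> ~ B c).
    apply: contrapT => hn; apply: ny => B nB; apply: contrapT => hne.
    apply: hn; exists B; split => // c Cc Bc; apply: hne; exists c.
    by split.
  have nB' : nbhs 0 (-%R @` (+%R (- f x0) @` B)).
    apply: nbhs0N; have := nbhsB (- f x0) nB; by rewrite addNr.
  have [Bs Bcvx [Bopen Bbasis]] := @locally_convex R Y.
  have [W [BW W0] WB] := Bbasis 0 _ nB'.
  have nW : nbhs 0 W by apply: open_nbhs_nbhs; split => //; exact: Bopen.
  have cW : @convex_set R Y W by apply: Bcvx; rewrite inE.
  have cC : @convex_set R Y C by exact: conv_hull_convex.
  pose psi := gpsi R Y C W.
  have := H psi (@gpsi_cont R Y C W cW W0 nW) (@gpsi_quasi R Y C W cC cW W0).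
  move=> heq.
  have h1 : (1 <= psi (f x0)).
    apply: gpsi_y => // c w Cc Ww ey.
    have [_ [b Bb <-] ewb] := WB _ Ww.
    apply: (hB c Cc).
    have -> : c = b.
      by rewrite -(addrK w c) -ey -ewb opprK addNKr.
    done.
  have h2 : (ereal_sup [set (psi (f x))%:E | x in boundary Omega] <= 0%:E)%E.
    apply: ge_ereal_sup => _ [x Bx <-]; rewrite lee_fin.
    by apply: gpsiC => //; apply: sub_conv_hull; exists x.
  have h3 : ((psi (f x0))%:E <= ereal_sup [set (psi (f x))%:E | x in Omega])%E.
    by apply: ereal_sup_ubound; exists x0.
  rewrite heq in h3.
  have := le_trans h3 h2; rewrite lee_fin => h4.
  by have := le_trans h1 h4; rewrite ler10.
Qed.
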